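(* If $g\in\mathcal{G}_0^0\cup\mathcal{G}_0^{sh}$, then for every finite measurable partition $\mathcal{P}$ we have $h(g,\mathcal{P})=C(g)\cdot h(\mathcal{P})$. Here $C(g)=\lim_{x\to0^+}g(x)/\eta(x)$ and $h(\mathcal{P})=h(\eta,\mathcal{P})$ is the Shannon dynamical entropy.
   Context: $\mathcal{G}_0$ is the set of concave functions $g:[0,1]\to\mathbb{R}$ with $g(0)=\lim_{x\to0^+}g(x)=0$. Let $\eta(x)=-x\log x$ and $\eta(0)=0$. Define $\mathcal{G}_0^0=\{g\in\mathcal{G}_0:\lim_{x\to0^+}g(x)/\eta(x)=0\}$ and $\mathcal{G}_0^{sh}=\{g\in\mathcal{G}_0:0<\lim_{x\to0^+}g(x)/\eta(x)<\infty\}$. $T$ is a measure-preserving map of a probability space $(X,\Sigma,\mu)$. For a finite measurable partition $\mathcal{P}$, let $\mathcal{P}_n=\bigvee_{i=0}^{n-1}T^{-i}\mathcal{P}$, $H(g,\mathcal{P})=\sum_{A\in\mathcal{P}}g(\mu(A))$, and $h(g,\mathcal{P})=\limsup_{n\to\infty}\frac1nH(g,\mathcal{P}_n)$. *)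

(* Defs.v *)
From Stdlib Require Import Reals Lra List.
Open Scope R_scope.
Import ListNotations.

Definition set (X : Type) := X -> Prop.

Definition preimage {X : Type} (T : X -> X) (A : set X) : set X := fun x => A (T x).

Definition is_sigma_algebra {X : Type} (S : set X -> Prop) : Prop :=
  S (fun _ => True) /\
  (forall A, S A -> S (fun x => ~ A x)) /\
  (forall A : nat -> set X, (forall n, S (A n)) -> S (fun x => exists n, A n x)).

Definition is_prob_measure {X : Type} (S : set X -> Prop) (mu : set X -> R) : Prop :=
  (forall A, S A -> 0 <= mu A) /\
  mu (fun _ => True) = 1 /\
  (forall A : nat -> set X,
      (forall n, S (A n)) ->
      (forall m n x, m <> n -> A m x -> A n x -> False) ->
      Un_cv (fun N => sum_f_R0 (fun n => mu (A n)) N) (mu (fun x => exists n, A n x))).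

Definition measure_preserving {X : Type} (S : set X -> Prop) (mu : set X -> R)
    (T : X -> X) : Prop :=
  forall A, S A -> S (preimage T A) /\ mu (preimage T A) = mu A.

Definition finite_measurable_partition {X : Type} (S : set X -> Prop)
    (P : list (set X)) : Prop :=
  (forall A, In A P -> S A) /\
  (forall i j x, (i < length P)%nat -> (j < length P)%nat -> i <> j ->
      nth i P (fun _ => False) x -> nth j P (fun _ => False) x -> False) /\
  (forall x, exists A, In A P /\ A x).

Fixpoint iterT {X : Type} (T : X -> X) (k : nat) (x : X) : X :=
  match k with O => x | S k' => T (iterT T k' x) end.

(* P_n = P v T^{-1}P v ... v T^{-(n-1)}P (cells A_0 /\ T^{-1}A_1 /\ ...;
   empty cells are allowed and contribute g(0) = 0). P_0 = {X}. *)
Fixpoint refine {X : Type} (T : X -> X) (P : list (set X)) (n : nat) : list (set X) :=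
  match n with
  | O => [fun _ => True]
  | S k => flat_map (fun A => map (fun B => (fun x => A x /\ B (iterT T k x))) P)
                    (refine T P k)
  end.

Definition Hg {X : Type} (mu : set X -> R) (g : R -> R) (P : list (set X)) : R :=
  fold_right (fun A acc => g (mu A) + acc) 0 P.

Definition eta (x : R) : R := if Rle_dec x 0 then 0 else - x * ln x.

Definition concave_on_01 (g : R -> R) : Prop :=
  forall x y t, 0 <= x <= 1 -> 0 <= y <= 1 -> 0 <= t <= 1 ->
    t * g x + (1 - t) * g y <= g (t * x + (1 - t) * y).

Definition in_G0 (g : R -> R) : Prop :=
  concave_on_01 g /\ g 0 = 0 /\
  (forall eps, 0 < eps -> exists delta, 0 < delta /\
     forall x, 0 < x < delta -> Rabs (g x) < eps).

Definition right_limit_at_0 (f : R -> R) (L : R) : Prop :=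
  forall eps, 0 < eps -> exists delta, 0 < delta /\
    forall x, 0 < x < delta -> Rabs (f x - L) < eps.

Definition is_limsup (u : nat -> R) (l : R) : Prop :=
  (forall eps, 0 < eps -> exists N, forall n, (N <= n)%nat -> u n < l + eps) /\
  (forall eps, 0 < eps -> forall N, exists n, (N <= n)%nat /\ l - eps < u n).

Definition hseq {X : Type} (mu : set X -> R) (T : X -> X) (g : R -> R)
    (P : list (set X)) (n : nat) : R :=
  Hg mu g (refine T P n) / INR n.

(* Main.v *)
Require Import Defs.
From Stdlib Require Import Reals Lra Lia List Classical FunctionalExtensionality PropExtensionality.
Open Scope R_scope.
Import ListNotations.

Lemma set_ext {X : Type} (A B : set X) : (forall x, A x <-> B x) -> A = B.
Proof. intros H; apply functional_extensionality; intro x; apply propositional_extensionality; auto. Qed.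

Lemma S_empty {X} (S : set X -> Prop) : is_sigma_algebra S -> S (fun _ => False).
Proof.
  intros [HT [HC HU]].
  replace (fun _ : X => False) with (fun x : X => ~ (fun _ => True) x).
  - apply HC; exact HT.
  - apply set_ext; intro x; simpl; tauto.
Qed.

Definition seq2 {X} (A B : set X) (n : nat) : set X :=
  match n with O => A | 1%nat => B | _ => fun _ => False end.

Lemma S_union {X} (S : set X -> Prop) A B : is_sigma_algebra S -> S A -> S B ->
  S (fun x => A x \/ B x).
Proof.
  intros HS HA HB. pose proof HS as [HT [HC HU]].
  replace (fun x => A x \/ B x) with (fun x => exists n, seq2 A B n x).
  - apply HU. intros [|[|n]]; simpl; auto. apply S_empty; auto.
  - apply set_ext; intro x; split.
    + intros [[|[|n]] H]; simpl in H; tauto.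
    + intros [H|H]; [exists O | exists 1%nat]; simpl; auto.
Qed.

Lemma S_inter {X} (S : set X -> Prop) A B : is_sigma_algebra S -> S A -> S B ->
  S (fun x => A x /\ B x).
Proof.
  intros HS HA HB. pose proof HS as [HT [HC HU]].
  replace (fun x => A x /\ B x) with (fun x => ~ (fun y => (fun z => ~ A z) y \/ (fun z => ~ B z) y) x).
  - apply HC. apply S_union; auto.
  - apply set_ext; intro x; simpl; split.
    + intro H. apply not_or_and in H. destruct H; split; apply NNPP; auto.
    + tauto.
Qed.

Lemma S_iter {X} (S : set X -> Prop) mu T : measure_preserving S mu T ->
  forall k A, S A -> S (fun x => A (iterT T k x)).
Proof.
  intros HT k. induction k; intros A HA; simpl.
  - replace (fun x => A x) with A by (apply set_ext; tauto). exact HA.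
  - apply (IHk (preimage T A)). apply HT. exact HA.
Qed.

Lemma sum_const (m : R) N : sum_f_R0 (fun _ => m) N = INR (Datatypes.S N) * m.
Proof. induction N; simpl sum_f_R0. simpl; ring. rewrite IHN, (S_INR (Datatypes.S N)). ring. Qed.

Lemma mu_empty {X} S (mu : set X -> R) : is_sigma_algebra S -> is_prob_measure S mu ->
  mu (fun _ => False) = 0.
Proof.
  intros HS [Hpos [H1 Hadd]].
  assert (HE := S_empty S HS).
  specialize (Hadd (fun _ => fun _ => False) (fun _ => HE) (fun m n x _ H _ => H)).
  cbv beta in Hadd.
  assert (Heq : (fun x : X => exists _ : nat, False) = (fun _ : X => False))
    by (apply set_ext; intro; split; [intros [_ H]; exact H| tauto]).
  rewrite Heq in Hadd.
  assert (0 <= mu (fun _ : X => False)) by (apply Hpos; auto).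
  destruct (Rle_lt_or_eq_dec 0 _ H) as [Hlt|Heq2]; [|auto].
  destruct (Hadd _ Hlt) as [N HN].
  specialize (HN (Datatypes.S N) ltac:(lia)). rewrite sum_const in HN.
  unfold Rdist in HN. rewrite (S_INR (Datatypes.S N)), (S_INR N) in HN.
  assert (0 <= INR N) by apply pos_INR.
  rewrite Rabs_right in HN; nra.
Qed.

Lemma mu_union2 {X} S (mu : set X -> R) A B : is_sigma_algebra S -> is_prob_measure S mu ->
  S A -> S B -> (forall x, A x -> B x -> False) ->
  mu (fun x => A x \/ B x) = mu A + mu B.
Proof.
  intros HS Hmu HA HB Hd. pose proof Hmu as [Hpos [H1 Hadd]].
  assert (HE := S_empty S HS).
  assert (Hm : forall n, S (seq2 A B n)) by (intros [|[|n]]; simpl; auto).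
  assert (Hdj : forall m n x, m <> n -> seq2 A B m x -> seq2 A B n x -> False).
  { intros [|[|m]] [|[|n]] x Hmn; simpl; try tauto; eauto. }
  specialize (Hadd _ Hm Hdj).
  replace (fun x => exists n, seq2 A B n x) with (fun x => A x \/ B x) in Hadd.
  2:{ apply set_ext; intro x; split.
    + intros [H|H]; [exists O | exists 1%nat]; simpl; auto.
    + intros [[|[|n]] H]; simpl in H; tauto. }
  eapply UL_sequence; [exact Hadd|].
  intros e He. exists 1%nat. intros n Hn.
  destruct n as [|n]; [lia|].
  assert (sum_f_R0 (fun n => mu (seq2 A B n)) (Datatypes.S n) = mu A + mu B).
  { induction n. simpl. ring. simpl sum_f_R0 in *. rewrite IHn by lia.
    simpl. rewrite (mu_empty S mu HS Hmu). ring. }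
  rewrite H. unfold Rdist. rewrite Rminus_diag, Rabs_R0. exact He.
Qed.

Lemma mu_le1 {X} S (mu : set X -> R) A : is_sigma_algebra S -> is_prob_measure S mu ->
  S A -> mu A <= 1.
Proof.
  intros HS Hmu HA. pose proof Hmu as [Hpos [H1 Hadd]]. pose proof HS as [HT [HC HU]].
  assert (mu (fun x => A x \/ (fun y => ~ A y) x) = mu A + mu (fun y => ~ A y)).
  { apply (mu_union2 S); auto. }
  cbv beta in H.
  replace (fun x => A x \/ ~ A x) with (fun _ : X => True) in H
    by (apply set_ext; intro x; split; [intros _; apply classic | tauto]).
  assert (0 <= mu (fun y => ~ A y)) by (apply Hpos; auto). lra.
Qed.

Definition sumL {A : Type} (f : A -> R) (L : list A) : R :=
  fold_right (fun a acc => f a + acc) 0 L.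

Lemma sumL_app {A} (f : A -> R) L1 L2 : sumL f (L1 ++ L2) = sumL f L1 + sumL f L2.
Proof. induction L1; simpl; [ring|]. unfold sumL in *; simpl. rewrite IHL1. ring. Qed.

Lemma sumL_flat_map {A B} (f : B -> R) (h : A -> list B) L :
  sumL f (flat_map h L) = sumL (fun a => sumL f (h a)) L.
Proof. induction L; simpl; auto. rewrite sumL_app, IHL. reflexivity. Qed.

Lemma sumL_ext_in {A} (f f' : A -> R) L : (forall a, In a L -> f a = f' a) -> sumL f L = sumL f' L.
Proof. induction L; simpl; intros H; auto. unfold sumL in *; simpl. rewrite H, IHL; auto. Qed.

Lemma sumL_le {A} (f f' : A -> R) L : (forall a, In a L -> f a <= f' a) -> sumL f L <= sumL f' L.
Proof. induction L; simpl; intros H; [lra|]. unfold sumL in *; simpl.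
  assert (f a <= f' a) by auto. assert (fold_right (fun a0 acc => f a0 + acc) 0 L <= fold_right (fun a0 acc => f' a0 + acc) 0 L) by auto. lra. Qed.

Lemma sumL_lin {A} (f h : A -> R) c d L : sumL (fun a => c * f a + d * h a) L = c * sumL f L + d * sumL h L.
Proof. induction L; unfold sumL in *; simpl; [ring|]. rewrite IHL. ring. Qed.

Lemma sumL_nonneg {A} (f : A -> R) L : (forall a, In a L -> 0 <= f a) -> 0 <= sumL f L.
Proof. induction L; simpl; intros H; unfold sumL in *; simpl; [lra|].
  assert (0 <= f a) by auto. assert (0 <= fold_right (fun a0 acc => f a0 + acc) 0 L) by auto. lra. Qed.

Lemma sumL_ge_elem {A} (f : A -> R) L a : (forall a, In a L -> 0 <= f a) -> In a L -> f a <= sumL f L.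
Proof. induction L; simpl; intros H Ha; [tauto|]. unfold sumL in *; simpl.
  destruct Ha as [<-|Ha].
  - assert (0 <= fold_right (fun a0 acc => f a0 + acc) 0 L) by (apply sumL_nonneg; auto). lra.
  - assert (0 <= f a0) by auto. assert (f a <= fold_right (fun a0 acc => f a0 + acc) 0 L) by auto. lra.
Qed.

Fixpoint pdisj {X} (L : list (set X)) : Prop :=
  match L with [] => True | A :: L' => (forall B x, In B L' -> A x -> B x -> False) /\ pdisj L' end.

Lemma idx_pdisj {X} (L : list (set X)) :
  (forall i j x, (i < length L)%nat -> (j < length L)%nat -> i <> j ->
      nth i L (fun _ => False) x -> nth j L (fun _ => False) x -> False) -> pdisj L.
Proof.
  induction L as [|a L IH]; simpl; intros H; auto. split.
  - intros B x HB Ha Hb. destruct (In_nth L B (fun _ => False) HB) as [j [Hj Hn]].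
    apply (H O (Datatypes.S j) x); simpl; try lia; auto. rewrite Hn; auto.
  - apply IH. intros i j x Hi Hj Hij. apply (H (Datatypes.S i) (Datatypes.S j) x); simpl; lia.
Qed.

Lemma pdisj_map {X} (F : set X) (f : X -> X) L : pdisj L ->
  pdisj (map (fun B => fun x => F x /\ B (f x)) L).
Proof.
  induction L as [|a L IH]; simpl; auto. intros [H1 H2]; split; auto.
  intros B x HB [_ Ha] Hb. apply in_map_iff in HB. destruct HB as [B0 [<- HB0]].
  destruct Hb. eauto.
Qed.

Lemma part_sum {X} S (mu : set X -> R) (L : list (set X)) :
  is_sigma_algebra S -> is_prob_measure S mu ->
  (forall B, In B L -> S B) -> pdisj L ->
  mu (fun x => exists B, In B L /\ B x) = sumL mu L.
Proof.
  intros HS Hmu. induction L as [|a L IH]; intros HL Hd.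
  - replace (fun x => exists B : set X, In B [] /\ B x) with (fun _ : X => False).
    + unfold sumL; simpl. apply (mu_empty S); auto.
    + apply set_ext; intro x; split; [tauto|]. intros [B [[] _]].
  - destruct Hd as [Hd1 Hd2].
    assert (HU : S (fun x => exists B, In B L /\ B x)).
    { pose proof HS as [HT [HC HU]].
      replace (fun x => exists B, In B L /\ B x) with (fun x => exists n, nth n L (fun _ => False) x).
      - apply HU. intro n. destruct (Nat.lt_ge_cases n (length L)).
        + apply HL. right. apply nth_In; auto.
        + rewrite nth_overflow by auto. apply S_empty; auto.
      - apply set_ext; intro x; split.
        + intros [n Hn]. destruct (Nat.lt_ge_cases n (length L)).
          * exists (nth n L (fun _ => False)). split; auto. apply nth_In; auto.
          * rewrite nth_overflow in Hn by auto. destruct Hn.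
        + intros [B [HB Hx]]. destruct (In_nth L B (fun _ => False) HB) as [j [_ Hn]].
          exists j. rewrite Hn; auto. }
    replace (fun x => exists B, In B (a :: L) /\ B x) with
      (fun x => a x \/ (fun y => exists B, In B L /\ B y) x).
    + rewrite (mu_union2 S); auto.
      * rewrite IH; try reflexivity; auto; intros; apply HL; simpl; auto.
      * apply HL; simpl; auto.
      * intros x Ha [B [HB Hb]]. eauto.
    + apply set_ext; intro x; simpl; split.
      * intros [H|[B [HB Hb]]]; [exists a; auto | exists B; auto].
      * intros [B [[<-|HB] Hb]]; auto. right; exists B; auto.
Qed.

Lemma refine_meas {X} S mu T (P : list (set X)) :
  is_sigma_algebra S -> measure_preserving S mu T -> finite_measurable_partition S P ->
  forall n A, In A (refine T P n) -> S A.
Proof.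
  intros HS HT [HP1 _]. induction n; simpl; intros A HA.
  - destruct HA as [<-|[]]. apply HS.
  - apply in_flat_map in HA. destruct HA as [A0 [HA0 HA]].
    apply in_map_iff in HA. destruct HA as [B [<- HB]].
    apply (S_inter S); auto. apply (S_iter S mu T HT); auto.
Qed.

Lemma refine_sum {X} S mu T (P : list (set X)) :
  is_sigma_algebra S -> is_prob_measure S mu -> measure_preserving S mu T ->
  finite_measurable_partition S P ->
  forall n, sumL mu (refine T P n) = 1.
Proof.
  intros HS Hmu HT HP. pose proof HP as [HP1 [HP2 HP3]].
  induction n; simpl.
  - unfold sumL; simpl. destruct Hmu as [_ [H1 _]]. rewrite H1; ring.
  - rewrite sumL_flat_map. rewrite <- IHn. apply sumL_ext_in. intros A HA.
    assert (HSA := refine_meas S mu T P HS HT HP n A HA).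
    rewrite <- (part_sum S); auto.
    + f_equal. apply set_ext; intro x; split.
      * intros [B [HB Hb]]. apply in_map_iff in HB. destruct HB as [B0 [<- _]]. apply Hb.
      * intros Hx. destruct (HP3 (iterT T n x)) as [B [HB Hb]].
        exists (fun y => A y /\ B (iterT T n y)). split; auto.
        apply in_map_iff. exists B; auto.
    + intros B HB. apply in_map_iff in HB. destruct HB as [B0 [<- HB0]].
      apply (S_inter S); auto. apply (S_iter S mu T HT); auto.
    + apply (pdisj_map A (iterT T n)). apply idx_pdisj. exact HP2.
Qed.

Lemma ln_mono_le a b : 0 < a -> a <= b -> ln a <= ln b.
Proof. intros Ha Hab. destruct (Rle_lt_or_eq_dec _ _ Hab) as [H|<-]; [left; apply ln_increasing; auto | right; auto]. Qed.

Lemma eta_pos x : 0 < x -> eta x = - x * ln x.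
Proof. intros H. unfold eta. destruct (Rle_dec x 0); [lra|auto]. Qed.

Lemma eta_nonneg x : x <= 1 -> 0 <= eta x.
Proof.
  intros H. unfold eta. destruct (Rle_dec x 0); [lra|].
  assert (ln x <= 0) by (rewrite <- ln_1; apply ln_mono_le; lra). nra.
Qed.

Lemma eta_gt0 x : 0 < x < 1 -> 0 < eta x.
Proof.
  intros H. rewrite eta_pos by lra.
  assert (ln x < 0) by (rewrite <- ln_1; apply ln_increasing; lra). nra.
Qed.

Lemma cell_bound (g : R -> R) (C : R) :
  concave_on_01 g -> g 0 = 0 -> 0 <= C ->
  right_limit_at_0 (fun x => g x / eta x) C ->
  forall eps, 0 < eps -> exists K, 0 <= K /\ forall x, 0 <= x <= 1 ->
    g x <= (C + eps) * eta x + K * x /\ (C - eps) * eta x + (- K) * x <= g x.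
Proof.
  intros Hc Hg0 HC Hlim eps Heps.
  destruct (Hlim eps Heps) as [d [Hd Hdx]].
  set (d' := Rmin d (1/2)).
  assert (Hd'1 : d' <= d) by apply Rmin_l.
  assert (Hd'2 : d' <= 1/2) by apply Rmin_r.
  assert (Hd'0 : 0 < d') by (apply Rmin_pos; lra).
  assert (Hlnd : ln d' < 0) by (rewrite <- ln_1; apply ln_increasing; lra).
  exists (Rabs (g d') / d' + Rabs (g 1) + C * (- ln d')).
  assert (Ha1 : 0 <= Rabs (g d') / d') by (apply Rmult_le_pos; [apply Rabs_pos| left; apply Rinv_0_lt_compat; lra]).
  assert (Ha2 : 0 <= Rabs (g 1)) by apply Rabs_pos.
  assert (Ha3 : 0 <= C * (- ln d')) by nra.
  split; [lra|].
  intros x Hx.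
  set (K := Rabs (g d') / d' + Rabs (g 1) + C * (- ln d')).
  assert (HK : 0 <= K) by (unfold K; lra).
  assert (He := eta_nonneg x ltac:(lra)).
  destruct (Rtotal_order x 0) as [Hlt|[Heq|Hgt]]; [lra| |].
  { subst x. rewrite Hg0. unfold eta. destruct (Rle_dec 0 0); [|lra]. lra. }
  assert (Hlow : x * g 1 <= g x).
  { pose proof (Hc 1 0 x ltac:(lra) ltac:(lra) Hx) as Hcc.
    rewrite Hg0 in Hcc. replace (x * 1 + (1 - x) * 0) with x in Hcc by ring. lra. }
  destruct (Rlt_or_le x d') as [Hsmall|Hbig].
  - assert (Hep : 0 < eta x) by (apply eta_gt0; lra).
    pose proof (Hdx x ltac:(lra)) as H. apply Rabs_def2 in H. destruct H as [H1 H2].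
    assert (Hgx : g x = (g x / eta x) * eta x) by (field; lra).
    split; rewrite Hgx; nra.
  -
    assert (Hup : g x <= x * (Rabs (g d') / d')).
    { pose proof (Hc x 0 (d' / x) Hx ltac:(lra)) as H.
      assert (0 <= d'/x <= 1).
      { split. apply Rmult_le_pos; [lra| left; apply Rinv_0_lt_compat; lra].
        apply (Rmult_le_reg_r x); [lra|]. unfold Rdiv. rewrite Rmult_assoc, Rinv_l by lra. lra. }
      specialize (H H0). rewrite Hg0 in H.
      replace (d' / x * x + (1 - d' / x) * 0) with d' in H by (field; lra).
      assert (g x <= x / d' * g d').
      { replace (g x) with (x / d' * (d' / x * g x)) by (field; lra).
        apply Rmult_le_compat_l; [apply Rmult_le_pos; [lra| left; apply Rinv_0_lt_compat; lra]|lra]. }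
      assert (g d' <= Rabs (g d')) by apply Rle_abs.
      assert (x / d' * g d' <= x / d' * Rabs (g d')).
      { apply Rmult_le_compat_l; [apply Rmult_le_pos; [lra| left; apply Rinv_0_lt_compat; lra]|lra]. }
      replace (x * (Rabs (g d') / d')) with (x / d' * Rabs (g d')) by (field; lra). lra. }
    assert (Hetab : eta x <= x * (- ln d')).
    { rewrite eta_pos by lra. assert (ln d' <= ln x) by (apply ln_mono_le; lra). nra. }
    assert (- Rabs (g 1) <= g 1) by (pose proof (Rle_abs (- g 1)) as Hq; rewrite Rabs_Ropp in Hq; lra).
    split.
    + assert (0 <= (C+eps) * eta x) by nra.
      assert (x * (Rabs (g d') / d') <= K * x).
      { unfold K. nra. }
      lra.
    + assert ((C - eps) * eta x <= C * eta x) by nra.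
      assert (C * eta x <= C * (x * (- ln d'))) by (apply Rmult_le_compat_l; lra).
      assert (- (Rabs (g 1)) * x <= x * g 1) by nra.
      unfold K. nra.
Qed.

Lemma small_K (K e : R) : 0 < e -> exists N2, (1 <= N2)%nat /\ forall n, (N2 <= n)%nat -> K / INR n < e.
Proof.
  intros He. destruct (INR_archimed e (Rabs K) He) as [m Hm].
  exists (S m). split; [lia|]. intros n Hn.
  assert (INR m < INR n) by (apply lt_INR; lia).
  assert (0 <= INR m) by apply pos_INR.
  assert (Hn0 : 0 < INR n) by lra.
  assert (K <= Rabs K) by apply Rle_abs.
  apply (Rmult_lt_reg_r (INR n)); auto. unfold Rdiv. rewrite Rmult_assoc, Rinv_l by lra. nra.
Qed.

Lemma limsup_transfer (a b : nat -> R) C hP :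
  0 <= C -> is_limsup a hP -> (forall n, (1 <= n)%nat -> 0 <= a n) ->
  (forall eps, 0 < eps -> exists K, forall n, (1 <= n)%nat ->
      b n <= (C + eps) * a n + K / INR n /\ (C - eps) * a n - K / INR n <= b n) ->
  is_limsup b (C * hP).
Proof.
  intros HC [Ha1 Ha2] Hpos Hb.
  assert (HhP : 0 <= hP).
  { destruct (Rle_or_lt 0 hP) as [|Hlt]; auto.
    destruct (Ha1 (- hP) ltac:(lra)) as [N HN].
    specialize (HN (max N 1) ltac:(lia)). specialize (Hpos (max N 1) ltac:(lia)). lra. }
  assert (Hh1 : 0 < hP + 1) by lra. assert (HC1 : 0 < C + 1) by lra.
  split.
  - intros e He.
    set (eps := e / (4 * (hP + 1))).
    assert (Heps : 0 < eps) by (unfold eps; apply Rdiv_lt_0_compat; lra).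
    assert (Heps2 : eps * (hP + 1) = e / 4) by (unfold eps; field; lra).
    destruct (Hb eps Heps) as [K HK].
    set (eta := Rmin 1 (e / (4 * (C + 1)))).
    assert (Heta0 : 0 < eta) by (apply Rmin_pos; [lra| apply Rdiv_lt_0_compat; lra]).
    assert (Heta1 : eta <= 1) by apply Rmin_l.
    assert (HCeta : C * eta < e / 4).
    { assert (eta <= e / (4 * (C + 1))) by apply Rmin_r.
      assert (C * eta <= C * (e / (4 * (C + 1)))) by (apply Rmult_le_compat_l; lra).
      assert (C * (e / (4 * (C + 1))) < e / 4).
      { replace (e / 4) with ((C+1) * (e / (4 * (C + 1)))) by (field; lra).
        assert (0 < e / (4 * (C + 1))) by (apply Rdiv_lt_0_compat; lra). nra. }
      lra. }
    destruct (Ha1 eta Heta0) as [N1 HN1].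
    destruct (small_K K (e/4) ltac:(lra)) as [N2 [HN2a HN2]].
    exists (max N1 N2). intros n Hn.
    destruct (HK n ltac:(lia)) as [Hu _].
    specialize (HN1 n ltac:(lia)). specialize (HN2 n ltac:(lia)).
    assert ((C + eps) * a n <= (C + eps) * (hP + eta)) by (apply Rmult_le_compat_l; lra).
    assert (eps * (hP + eta) <= eps * (hP + 1)) by (apply Rmult_le_compat_l; lra).
    nra.
  - intros e He N.
    set (eps := e / (4 * (hP + 1))).
    assert (Heps : 0 < eps) by (unfold eps; apply Rdiv_lt_0_compat; lra).
    assert (Heps2 : eps * (hP + 1) = e / 4) by (unfold eps; field; lra).
    destruct (Hb eps Heps) as [K HK].
    set (eta := Rmin 1 (e / (4 * (C + 1)))).
    assert (Heta0 : 0 < eta) by (apply Rmin_pos; [lra| apply Rdiv_lt_0_compat; lra]).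
    assert (Heta1 : eta <= 1) by apply Rmin_l.
    assert (HCeta : C * eta < e / 4).
    { assert (eta <= e / (4 * (C + 1))) by apply Rmin_r.
      assert (C * eta <= C * (e / (4 * (C + 1)))) by (apply Rmult_le_compat_l; lra).
      assert (C * (e / (4 * (C + 1))) < e / 4).
      { replace (e / 4) with ((C+1) * (e / (4 * (C + 1)))) by (field; lra).
        assert (0 < e / (4 * (C + 1))) by (apply Rdiv_lt_0_compat; lra). nra. }
      lra. }
    destruct (Ha1 1 ltac:(lra)) as [N3 HN3].
    destruct (small_K K (e/4) ltac:(lra)) as [N2 [HN2a HN2]].
    destruct (Ha2 eta Heta0 (max N (max N2 N3))) as [n [Hn Han]].
    exists n. split; [lia|].
    destruct (HK n ltac:(lia)) as [_ Hl].
    specialize (HN3 n ltac:(lia)). specialize (HN2 n ltac:(lia)).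
    assert (C * (hP - eta) <= C * a n) by (apply Rmult_le_compat_l; lra).
    assert (eps * a n <= eps * (hP + 1)) by (apply Rmult_le_compat_l; lra).
    nra.
Qed.

Theorem mainTheorem5 (X : Type) (S : set X -> Prop) (mu : set X -> R) (T : X -> X)
  (g : R -> R) (C : R) :
  is_sigma_algebra S ->
  is_prob_measure S mu ->
  measure_preserving S mu T ->
  in_G0 g ->
  0 <= C ->
  right_limit_at_0 (fun x => g x / eta x) C ->
  forall P : list (set X), finite_measurable_partition S P ->
  forall hP : R, is_limsup (hseq mu T eta P) hP ->
  is_limsup (hseq mu T g P) (C * hP).
Proof.
  intros HS Hmu HT [Hc [Hg0 _]] HC Hlim P HP hP Ha.
  assert (Hcells : forall n A, In A (refine T P n) -> 0 <= mu A <= 1).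
  { intros n A HA. assert (HSA := refine_meas S mu T P HS HT HP n A HA).
    split; [apply Hmu; auto | apply (mu_le1 S); auto]. }
  apply (limsup_transfer (hseq mu T eta P) _ C hP HC Ha).
  - intros n Hn. unfold hseq.
    assert (0 < INR n) by (apply lt_0_INR; lia).
    apply Rmult_le_pos; [| left; apply Rinv_0_lt_compat; auto].
    change (0 <= sumL (fun A => eta (mu A)) (refine T P n)).
    apply sumL_nonneg. intros A HA. apply eta_nonneg. apply (Hcells n A HA).
  - intros eps Heps.
    destruct (cell_bound g C Hc Hg0 HC Hlim eps Heps) as [K [HK Hcell]].
    exists K. intros n Hn.
    assert (Hn0 : 0 < INR n) by (apply lt_0_INR; lia).
    assert (Hsum := refine_sum S mu T P HS Hmu HT HP n).
    assert (Hu : sumL (fun A => g (mu A)) (refine T P n) <=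
                 (C + eps) * sumL (fun A => eta (mu A)) (refine T P n) + K * sumL mu (refine T P n)).
    { rewrite <- sumL_lin. apply sumL_le. intros A HA. apply Hcell, (Hcells n A HA). }
    assert (Hl : (C - eps) * sumL (fun A => eta (mu A)) (refine T P n) + (- K) * sumL mu (refine T P n)
                 <= sumL (fun A => g (mu A)) (refine T P n)).
    { rewrite <- sumL_lin. apply sumL_le. intros A HA. apply Hcell, (Hcells n A HA). }
    rewrite Hsum in Hu, Hl.
    unfold hseq. change (Hg mu g (refine T P n)) with (sumL (fun A => g (mu A)) (refine T P n)).
    change (Hg mu eta (refine T P n)) with (sumL (fun A => eta (mu A)) (refine T P n)).
    set (Gs := sumL (fun A => g (mu A)) (refine T P n)) in *.
    set (Es := sumL (fun A => eta (mu A)) (refine T P n)) in *.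
    assert (Hi : 0 < / INR n) by (apply Rinv_0_lt_compat; auto).
    unfold Rdiv. split.
    + replace ((C + eps) * (Es * / INR n) + K * / INR n) with (((C + eps) * Es + K * 1) * / INR n) by ring.
      apply Rmult_le_compat_r; lra.
    + replace ((C - eps) * (Es * / INR n) - K * / INR n) with (((C - eps) * Es + - K * 1) * / INR n) by ring.
      apply Rmult_le_compat_r; lra.
Qed.
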